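(* For every integer $r\ge 1$, $$\sum_{n=1}^{\infty}\frac{n4^n}{(4n^2-1)(4n+2r+1)}\frac{\binom{2n}{n}}{\binom{4n+2r}{2n+r}}=\frac{1}{\sqrt{2}}\sum_{k=0}^{r-1}\frac{(-1)^k}{(2k+1)2^{2r-k+1}}\binom{r-1}{k}\mathcal{B}(k)-\frac{\varphi(2r+1)}{2^{2r+2}},$$ where $\mathcal{B}(k)=\int_0^{1/2}\frac{t^k}{\sqrt{1-t}}\,\mathrm{d}t$ and $\varphi(2k+1)=\int_0^1 t^{2k+1}\sqrt{1+t^2}\,\mathrm{d}t$. *)

(* Defs.v *)
From Stdlib Require Import Reals.
From Coquelicot Require Import Coquelicot.
Open Scope R_scope.

Definition binomR (n k : nat) : R := Binomial.C n k.

Definition calB (k : nat) : R := RInt (fun t => t ^ k / sqrt (1 - t)) 0 (1/2).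

Definition varphi (m : nat) : R := RInt (fun t => t ^ m * sqrt (1 + t ^ 2)) 0 1.

Definition summand (r n : nat) : R :=
  (INR n * 4 ^ n) / ((4 * INR n ^ 2 - 1) * (4 * INR n + 2 * INR r + 1))
  * (binomR (2 * n) n / binomR (4 * n + 2 * r) (2 * n + r)).

(* Main.v *)
Require Import Defs.
From Stdlib Require Import Reals Lra Lia.
From Coquelicot Require Import Coquelicot.
Open Scope R_scope.

Definition cb (k : nat) : R := Binomial.C (2 * k) k.

Lemma cb_pos k : 0 < cb k.
Proof.
  unfold cb, Binomial.C. apply Rdiv_lt_0_compat.
  - apply lt_0_INR, Factorial.lt_O_fact.
  - apply Rmult_lt_0_compat; apply lt_0_INR, Factorial.lt_O_fact.
Qed.

Lemma cb_S k : cb (S k) = cb k * (2 * (2 * INR k + 1) / (INR k + 1)).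
Proof.
  unfold cb, Binomial.C.
  replace (2 * S k - S k)%nat with (S k) by lia.
  replace (2 * k - k)%nat with k by lia.
  replace (2 * S k)%nat with (S (S (2 * k))) by lia.
  rewrite !fact_simpl, !mult_INR, !S_INR, mult_INR.
  simpl (INR 2).
  assert (H1 := INR_fact_neq_0 k). assert (H2 := INR_fact_neq_0 (2*k)).
  assert (0 <= INR k) by apply pos_INR.
  field. repeat split; lra.
Qed.

Lemma cb_0 : cb 0 = 1.
Proof. unfold cb, Binomial.C. simpl. field. Qed.

Definition h (r n : nat) : R := 4 ^ n * cb n / cb (2 * n + r).

Lemma h_pos r n : 0 < h r n.
Proof.
  unfold h. apply Rdiv_lt_0_compat; [apply Rmult_lt_0_compat|]; try apply cb_pos.
  apply pow_lt; lra.
Qed.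

Lemma INR2 n r : INR (2 * n + r) = 2 * INR n + INR r.
Proof. rewrite plus_INR, mult_INR. simpl. ring. Qed.

Lemma h_Sn r n : h r (S n) = h r n *
  (2 * (2 * INR n + 1) * (2 * INR n + INR r + 1) * (2 * INR n + INR r + 2) /
   ((INR n + 1) * (4 * INR n + 2 * INR r + 1) * (4 * INR n + 2 * INR r + 3))).
Proof.
  unfold h.
  replace (2 * S n + r)%nat with (S (S (2 * n + r))) by lia.
  rewrite !cb_S, !S_INR, INR2.
  assert (A := cb_pos n). assert (B := cb_pos (2*n+r)).
  assert (0 <= INR n) by apply pos_INR. assert (0 <= INR r) by apply pos_INR.
  simpl pow. field. repeat split; lra.
Qed.

Lemma h_Sr r n : h (S r) n = h r n *
  ((2 * INR n + INR r + 1) / (2 * (4 * INR n + 2 * INR r + 1))).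
Proof.
  unfold h.
  replace (2 * n + S r)%nat with (S (2 * n + r)) by lia.
  rewrite cb_S, INR2.
  assert (A := cb_pos n). assert (B := cb_pos (2*n+r)).
  assert (0 <= INR n) by apply pos_INR. assert (0 <= INR r) by apply pos_INR.
  field. repeat split; lra.
Qed.

Lemma h_00 : h 0 0 = 1.
Proof. unfold h. simpl. rewrite cb_0. field. Qed.

Definition x (r n : nat) : R := h r n / ((2 * INR n - 1) * (4 * INR n + 2 * INR r + 1)).
Definition y (r n : nat) : R := h r n / ((2 * INR n + 1) * (4 * INR n + 2 * INR r + 1)).

Lemma two_n_m1 n : 2 * INR n - 1 <> 0.
Proof. destruct n. simpl. lra. rewrite S_INR. assert (0 <= INR n) by apply pos_INR. lra. Qed.

Definition FX (s n : nat) : R :=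
  -4 * (INR n / (2 * INR n - 1)) * ((4 * INR n + 2 * INR s - 1) / (2 * INR n + INR s)) * h s n.

Lemma certX r n :
  (4 * INR (S r) + 6) * x (S r) n + INR (S r) * x r n = FX (S r) (S n) - FX (S r) n.
Proof.
  unfold x, FX. rewrite h_Sn, !h_Sr. rewrite !S_INR.
  assert (E := two_n_m1 n).
  assert (0 <= INR n) by apply pos_INR. assert (0 <= INR r) by apply pos_INR.
  field. repeat split; lra.
Qed.

Definition F0 (n : nat) : R := -2 * ((4 * INR n - 1) / (2 * INR n - 1)) * h 0 n.

Lemma certX0 n : 6 * x 0 n = F0 (S n) - F0 n.
Proof.
  unfold x, F0. rewrite h_Sn. rewrite !S_INR. simpl INR.
  assert (E := two_n_m1 n).
  assert (0 <= INR n) by apply pos_INR.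
  field. repeat split; lra.
Qed.

Definition G (s n : nat) : R := 4 * (INR n / (2 * INR n + INR s)) * h s n.

Lemma certY r n :
  4 * (2 * INR (S r) + 1) ^ 2 * y (S (S r)) n - 4 * INR (S r) * y (S r) n
  - INR (S r) * INR r * y r n = G (S r) (S n) - G (S r) n.
Proof.
  unfold y, G. rewrite h_Sn, !h_Sr. rewrite !S_INR.
  assert (0 <= INR n) by apply pos_INR. assert (0 <= INR r) by apply pos_INR.
  field. repeat split; lra.
Qed.

Lemma certY0 n : 4 * y 1 n = 2 * h 0 (S n) - 2 * h 0 n.
Proof.
  unfold y. rewrite h_Sn, h_Sr. simpl INR.
  assert (0 <= INR n) by apply pos_INR.
  field. repeat split; lra.
Qed.

Lemma tele_series (a F : nat -> R) (L : R) :
  (forall n, a n = F (S n) - F n) -> is_lim_seq F L -> is_series a (L - F 0%nat).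
Proof.
  intros Ha HF.
  unfold is_series. change (is_lim_seq (sum_n a) (L - F 0%nat)).
  apply is_lim_seq_ext with (fun n => F (S n) - F 0%nat).
  - intro n. rewrite sum_n_Reals. induction n as [|n IH].
    + simpl. rewrite Ha. ring.
    + simpl. rewrite <- IH, Ha. ring.
  - apply is_lim_seq_minus'. now apply -> is_lim_seq_incr_1. apply is_lim_seq_const.
Qed.

Lemma is_series_lin (a b : nat -> R) la lb al be :
  is_series a la -> is_series b lb ->
  is_series (fun n => al * a n + be * b n) (al * la + be * lb).
Proof.
  intros Ha Hb.
  exact (is_series_plus _ _ _ _ (is_series_scal al _ _ Ha) (is_series_scal be _ _ Hb)).
Qed.

Lemma lim_inv_S : is_lim_seq (fun n => / INR (S n)) 0.
Proof.
  assert (H : is_lim_seq (fun n => INR (S n)) p_infty).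
  { apply -> (is_lim_seq_incr_1 INR). apply is_lim_seq_INR. }
  apply (is_lim_seq_inv _ _ H). discriminate.
Qed.

Lemma lim_ratio a b c d : 0 < c -> 0 < c + d ->
  is_lim_seq (fun n => (a * INR n + b) / (c * INR n + d)) (a / c).
Proof.
  intros Hc Hcd.
  apply is_lim_seq_incr_1.
  apply is_lim_seq_ext with (fun n => (a + b * / INR (S n)) / (c + d * / INR (S n))).
  - intro n. assert (0 <= INR n) by apply pos_INR. rewrite S_INR.
    assert (0 <= c * INR n) by (apply Rmult_le_pos; lra).
    field. split; nra.
  - replace (a / c) with ((a + b * 0) / (c + d * 0)) by (field; lra).
    apply is_lim_seq_div'.
    + apply is_lim_seq_plus'. apply is_lim_seq_const.
      apply is_lim_seq_mult'. apply is_lim_seq_const. apply lim_inv_S.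
    + apply is_lim_seq_plus'. apply is_lim_seq_const.
      apply is_lim_seq_mult'. apply is_lim_seq_const. apply lim_inv_S.
    + lra.
Qed.

Definition c (n : nat) : R := cb n / 4 ^ n.

Lemma c_pos n : 0 < c n.
Proof. unfold c. apply Rdiv_lt_0_compat. apply cb_pos. apply pow_lt; lra. Qed.

Lemma c_S n : c (S n) = c n * ((2 * INR n + 1) / (2 * INR n + 2)).
Proof.
  unfold c. rewrite cb_S. simpl pow.
  assert (0 <= INR n) by apply pos_INR. assert (0 < 4 ^ n) by (apply pow_lt; lra).
  field. lra.
Qed.

Definition a (n : nat) : R := INR n * c n ^ 2.
Definition b (n : nat) : R := (INR n + / 2) * c n ^ 2.

Lemma a_incr n : a n <= a (S n).
Proof.
  unfold a. rewrite c_S, S_INR.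
  assert (0 <= INR n) by apply pos_INR. assert (P := c_pos n).
  replace ((INR n + 1) * (c n * ((2 * INR n + 1) / (2 * INR n + 2))) ^ 2)
    with (INR n * c n ^ 2 + c n ^ 2 / (4 * (INR n + 1))) by (field; lra).
  assert (0 <= c n ^ 2 / (4 * (INR n + 1))).
  { apply Rmult_le_pos. nra. left. apply Rinv_0_lt_compat. lra. }
  lra.
Qed.

Lemma b_decr n : b (S n) <= b n.
Proof.
  unfold b. rewrite c_S, S_INR.
  assert (0 <= INR n) by apply pos_INR. assert (P := c_pos n).
  replace ((INR n + 1 + / 2) * (c n * ((2 * INR n + 1) / (2 * INR n + 2))) ^ 2)
    with ((INR n + / 2) * c n ^ 2 - c n ^ 2 * (2 * INR n + 1) / (8 * (INR n + 1) ^ 2)) by (field; lra).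
  assert (0 <= c n ^ 2 * (2 * INR n + 1) / (8 * (INR n + 1) ^ 2)).
  { apply Rmult_le_pos. apply Rmult_le_pos; nra. left. apply Rinv_0_lt_compat. nra. }
  lra.
Qed.

Lemma b_le n : b n <= / 2.
Proof.
  induction n. unfold b, c. simpl. rewrite cb_0. lra.
  apply Rle_trans with (b n). apply b_decr. exact IHn.
Qed.

Lemma a_le n : a n <= / 2.
Proof.
  apply Rle_trans with (b n); [|apply b_le]. unfold a, b.
  assert (P := c_pos n). nra.
Qed.

Lemma a_lim : exists L, 0 < L /\ is_lim_seq a L.
Proof.
  assert (Hex : ex_finite_lim_seq a) by (apply ex_finite_lim_seq_incr with (/2); [apply a_incr | apply a_le]).
  assert (HL := Lim_seq_correct' a Hex).
  exists (real (Lim_seq a)). split; [|exact HL].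
  assert (H1 : forall n, / 4 <= a (S n)).
  { induction n. unfold a, c. simpl. rewrite cb_S, cb_0. simpl. lra.
    apply Rle_trans with (a (S n)). exact IHn. apply a_incr. }
  assert (H2 := is_lim_seq_le _ _ _ _ H1 (is_lim_seq_const (/4))
     (proj1 (is_lim_seq_incr_1 a _) HL)).
  simpl in H2. lra.
Qed.

Lemma h0_c n : h 0 n = c n / c (2 * n).
Proof.
  unfold h, c. rewrite Nat.add_0_r.
  replace (2 * n)%nat with (n + n)%nat by lia. rewrite pow_add.
  assert (A := cb_pos n). assert (B := cb_pos (n+n)). assert (0 < 4 ^ n) by (apply pow_lt; lra).
  field. lra.
Qed.

Lemma h0_lim : is_lim_seq (h 0) (sqrt 2).
Proof.
  destruct a_lim as [L [HL0 HL]].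
  apply is_lim_seq_incr_1.
  apply is_lim_seq_ext with (fun n => sqrt (2 * a (S n) / a (2 * S n))).
  - intro n. rewrite <- (sqrt_pow2 (h 0 (S n))) by (left; apply h_pos). f_equal.
    rewrite h0_c. unfold a. rewrite !mult_INR, S_INR. simpl (INR 2).
    assert (A := c_pos (S n)). assert (B := c_pos (2 * S n)).
    assert (0 <= INR n) by apply pos_INR.
    field. split; lra.
  - replace (sqrt 2) with (sqrt (2 * L / L)) by (f_equal; field; lra).
    apply is_lim_seq_continuous. apply continuity_pt_sqrt.
    apply Rmult_le_pos. lra. left. apply Rinv_0_lt_compat. lra.
    apply is_lim_seq_div'; [| |lra].
    + apply is_lim_seq_mult'. apply is_lim_seq_const. now apply -> is_lim_seq_incr_1.
    + apply (is_lim_seq_subseq a L (fun n => (2 * S n)%nat)); [|exact HL].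
      intros P [N HN]. exists N. intros n Hn. apply HN. lia.
Qed.

Lemma h_lim r : is_lim_seq (h r) (sqrt 2 / 4 ^ r).
Proof.
  induction r.
  - simpl. replace (sqrt 2 / 1) with (sqrt 2) by field. apply h0_lim.
  - apply is_lim_seq_ext with
      (fun n => h r n * ((2 * INR n + (INR r + 1)) / (8 * INR n + (4 * INR r + 2)))).
    + intro n. rewrite h_Sr. f_equal. f_equal; ring.
    + replace (sqrt 2 / 4 ^ S r) with (sqrt 2 / 4 ^ r * (2 / 8)).
      2:{ simpl pow. assert (0 < 4 ^ r) by (apply pow_lt; lra). field. lra. }
      apply is_lim_seq_mult'. exact IHr.
      apply lim_ratio. lra. assert (0 <= INR r) by apply pos_INR. lra.
Qed.

Lemma h_le0 r n : h r n <= h 0 n.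
Proof.
  induction r. lra.
  rewrite h_Sr. apply Rle_trans with (h r n); [|exact IHr].
  assert (P := h_pos r n). assert (0 <= INR n) by apply pos_INR. assert (0 <= INR r) by apply pos_INR.
  rewrite <- (Rmult_1_r (h r n)) at 2. apply Rmult_le_compat_l. lra.
  apply Rmult_le_reg_r with (2 * (4 * INR n + 2 * INR r + 1)). lra.
  unfold Rdiv. rewrite Rmult_assoc, Rinv_l by lra. lra.
Qed.

Lemma y_pos r n : 0 < y r n.
Proof.
  unfold y. assert (P := h_pos r n). assert (0 <= INR n) by apply pos_INR. assert (0 <= INR r) by apply pos_INR.
  apply Rdiv_lt_0_compat; nra.
Qed.

Lemma tele0 : is_series (fun n => h 0 (S n) - h 0 n) (sqrt 2 - 1).
Proof.
  replace (sqrt 2 - 1) with (sqrt 2 - h 0 0) by (rewrite h_00; ring).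
  apply tele_series. intro; ring. apply h0_lim.
Qed.

Lemma y_bound r n : y r n <= 3 * (h 0 (S n) - h 0 n).
Proof.
  rewrite h_Sn. simpl INR. unfold y.
  assert (P := h_pos 0 n). assert (Q := h_pos r n). assert (H := h_le0 r n).
  assert (0 <= INR n) by apply pos_INR. assert (0 <= INR r) by apply pos_INR.
  replace (3 * (h 0 n * (2 * (2 * INR n + 1) * (2 * INR n + 0 + 1) * (2 * INR n + 0 + 2) /
     ((INR n + 1) * (4 * INR n + 2 * 0 + 1) * (4 * INR n + 2 * 0 + 3))) - h 0 n))
    with (3 * h 0 n / ((4 * INR n + 1) * (4 * INR n + 3))) by (field; lra).
  apply Rmult_le_reg_r with ((2 * INR n + 1) * (4 * INR n + 2 * INR r + 1) * ((4 * INR n + 1) * (4 * INR n + 3))).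
  apply Rmult_lt_0_compat; nra.
  replace (h r n / ((2 * INR n + 1) * (4 * INR n + 2 * INR r + 1)) *
    ((2 * INR n + 1) * (4 * INR n + 2 * INR r + 1) * ((4 * INR n + 1) * (4 * INR n + 3))))
    with (h r n * ((4 * INR n + 1) * (4 * INR n + 3))) by (field; nra).
  replace (3 * h 0 n / ((4 * INR n + 1) * (4 * INR n + 3)) *
    ((2 * INR n + 1) * (4 * INR n + 2 * INR r + 1) * ((4 * INR n + 1) * (4 * INR n + 3))))
    with (3 * h 0 n * ((2 * INR n + 1) * (4 * INR n + 2 * INR r + 1))) by (field; nra).
  assert (h r n * (4 * INR n + 3) <= 3 * h 0 n * (2 * INR n + 1)) by nra.
  assert (0 <= h r n * (4 * INR n + 3)) by nra.
  nra.
Qed.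

Lemma ex_y r : ex_series (y r).
Proof.
  apply (@ex_series_le R_AbsRing R_CompleteNormedModule _ (fun n => 3 * (h 0 (S n) - h 0 n))).
  - intro n. change (norm (y r n)) with (Rabs (y r n)).
    rewrite Rabs_pos_eq by (left; apply y_pos). apply y_bound.
  - exists (3 * (sqrt 2 - 1)). apply (is_series_scal 3 _ _ tele0).
Qed.

Lemma ex_x r : ex_series (x r).
Proof.
  apply (@ex_series_le R_AbsRing R_CompleteNormedModule _ (fun n => 3 * y r n)).
  - intro n. change (norm (x r n)) with (Rabs (x r n)).
    unfold x, y. assert (P := h_pos r n). assert (0 <= INR r) by apply pos_INR.
    destruct n.
    + simpl INR.
      replace (h r 0 / ((2 * 0 - 1) * (4 * 0 + 2 * INR r + 1))) with (- (h r 0 / (2 * INR r + 1))) by (field; lra).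
      rewrite Rabs_Ropp, Rabs_pos_eq.
      2:{ left. apply Rdiv_lt_0_compat; lra. }
      replace (h r 0 / ((2 * 0 + 1) * (4 * 0 + 2 * INR r + 1))) with (h r 0 / (2 * INR r + 1)) by (field; lra).
      assert (0 < h r 0 / (2 * INR r + 1)) by (apply Rdiv_lt_0_compat; lra). lra.
    + rewrite S_INR. assert (0 <= INR n) by apply pos_INR.
      rewrite Rabs_pos_eq. 2:{ left. apply Rdiv_lt_0_compat. lra. nra. }
      set (N := INR n + 1). set (D := 4 * N + 2 * INR r + 1).
      assert (1 <= N) by (unfold N; lra). assert (0 < D) by (unfold D; lra).
      replace (h r (S n) / ((2 * N - 1) * D)) with (h r (S n) / D * / (2 * N - 1)) by (field; lra).
      replace (3 * (h r (S n) / ((2 * N + 1) * D))) with (h r (S n) / D * (3 / (2 * N + 1))) by (field; lra).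
      apply Rmult_le_compat_l. left. apply Rdiv_lt_0_compat. apply h_pos. lra.
      apply Rmult_le_reg_r with ((2 * N - 1) * (2 * N + 1)). nra.
      replace (/ (2 * N - 1) * ((2 * N - 1) * (2 * N + 1))) with (2 * N + 1) by (field; lra).
      replace (3 / (2 * N + 1) * ((2 * N - 1) * (2 * N + 1))) with (3 * (2 * N - 1)) by (field; lra).
      lra.
  - destruct (ex_y r) as [l Hl]. exists (3 * l). exact (is_series_scal 3 _ _ Hl).
Qed.

Definition XS r := Series (x r).
Definition YS r := Series (y r).

Lemma combo_eq (u v : nat -> R) al be L :
  ex_series u -> ex_series v ->
  is_series (fun n => al * u n + be * v n) L -> al * Series u + be * Series v = L.
Proof.
  intros Hu Hv HL.
  assert (H := is_series_lin _ _ _ _ al be (Series_correct _ Hu) (Series_correct _ Hv)).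
  rewrite <- (is_series_unique _ _ H). now apply is_series_unique.
Qed.

Lemma scal_eq (u : nat -> R) al L : ex_series u -> is_series (fun n => al * u n) L -> al * Series u = L.
Proof.
  intros Hu HL.
  assert (H : is_series (fun n => al * u n) (al * Series u)) by exact (is_series_scal al _ _ (Series_correct _ Hu)).
  rewrite <- (is_series_unique _ _ H). now apply is_series_unique.
Qed.

Lemma lim_FX s : is_lim_seq (FX s) (-4 * (1/2) * (4/2) * (sqrt 2 / 4 ^ s)).
Proof.
  unfold FX. assert (0 <= INR s) by apply pos_INR.
  apply is_lim_seq_mult'; [apply is_lim_seq_mult'; [apply is_lim_seq_mult'|]|].
  - apply is_lim_seq_const.
  - apply is_lim_seq_ext with (fun n => (1 * INR n + 0) / (2 * INR n + -1)).
    intro; f_equal; ring. apply lim_ratio; lra.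
  - apply is_lim_seq_ext with (fun n => (4 * INR n + (2 * INR s - 1)) / (2 * INR n + INR s)).
    intro; f_equal; ring. apply lim_ratio; lra.
  - apply h_lim.
Qed.

Lemma XS_rec r : (4 * INR (S r) + 6) * XS (S r) + INR (S r) * XS r = - (sqrt 2 / 4 ^ r).
Proof.
  unfold XS. apply combo_eq. apply ex_x. apply ex_x.
  replace (- (sqrt 2 / 4 ^ r)) with (-4 * (1/2) * (4/2) * (sqrt 2 / 4 ^ S r) - FX (S r) 0).
  2:{ assert (E : FX (S r) 0 = 0) by (unfold FX; simpl (INR 0); unfold Rdiv; ring).
        rewrite E. simpl pow. assert (0 < 4 ^ r) by (apply pow_lt; lra). field. lra. }
  apply tele_series. apply certX. apply lim_FX.
Qed.

Lemma XS_0 : 6 * XS 0 = 2 - 4 * sqrt 2.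
Proof.
  unfold XS. apply scal_eq. apply ex_x.
  replace (2 - 4 * sqrt 2) with (-2 * (4/2) * (sqrt 2 / 4 ^ 0) - F0 0).
  2:{ unfold F0. rewrite h_00. simpl. field. }
  apply tele_series. apply certX0.
  unfold F0. apply is_lim_seq_mult'; [apply is_lim_seq_mult'|].
  - apply is_lim_seq_const.
  - apply lim_ratio; lra.
  - apply h_lim.
Qed.

Lemma lim_G s : is_lim_seq (G s) (4 * (1/2) * (sqrt 2 / 4 ^ s)).
Proof.
  unfold G. assert (0 <= INR s) by apply pos_INR.
  apply is_lim_seq_mult'; [apply is_lim_seq_mult'|].
  - apply is_lim_seq_const.
  - apply is_lim_seq_ext with (fun n => (1 * INR n + 0) / (2 * INR n + INR s)).
    intro; f_equal; ring. apply lim_ratio; lra.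
  - apply h_lim.
Qed.

Lemma YS_rec r :
  4 * (2 * INR (S r) + 1) ^ 2 * YS (S (S r)) - 4 * INR (S r) * YS (S r)
  - INR (S r) * INR r * YS r = 2 * (sqrt 2 / 4 ^ S r).
Proof.
  unfold YS.
  assert (H1 := Series_correct _ (ex_y (S (S r)))).
  assert (H2 := Series_correct _ (ex_y (S r))).
  assert (H3 := Series_correct _ (ex_y r)).
  assert (H := is_series_lin _ _ _ _ 1 (- (INR (S r) * INR r)) (is_series_lin _ _ _ _ (4 * (2 * INR (S r) + 1) ^ 2) (- (4 * INR (S r))) H1 H2) H3).
  apply is_series_unique in H.
  replace (4 * (2 * INR (S r) + 1) ^ 2 * Series (y (S (S r))) - 4 * INR (S r) * Series (y (S r)) -
    INR (S r) * INR r * Series (y r)) with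
   (1 * (4 * (2 * INR (S r) + 1) ^ 2 * Series (y (S (S r))) + - (4 * INR (S r)) * Series (y (S r))) +
    - (INR (S r) * INR r) * Series (y r)) by ring.
  rewrite <- H. apply is_series_unique.
  replace (2 * (sqrt 2 / 4 ^ S r)) with (4 * (1/2) * (sqrt 2 / 4 ^ S r) - G (S r) 0).
  2:{ assert (E : G (S r) 0 = 0) by (unfold G; simpl (INR 0); unfold Rdiv; ring).
        rewrite E. change (4 * (1/2) * (sqrt 2 / 4 ^ S r) - 0 = 2 * (sqrt 2 / 4 ^ S r)). field. apply pow_nonzero; lra. }
  apply tele_series. 2: apply lim_G.
  intro n. rewrite <- certY. ring.
Qed.

Lemma YS_1 : 4 * YS 1 = 2 * sqrt 2 - 2.
Proof.
  unfold YS. apply scal_eq. apply ex_y.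
  replace (2 * sqrt 2 - 2) with (2 * sqrt 2 - (fun n => 2 * h 0 n) 0%nat).
  2:{ simpl. rewrite h_00. ring. }
  apply (tele_series _ (fun n => 2 * h 0 n) (2 * sqrt 2)). apply certY0.
  apply is_lim_seq_mult'. apply is_lim_seq_const. apply h0_lim.
Qed.

Lemma INR_match k : match k with 0%nat => 1 | S _ => INR k + 1 end = INR k + 1.
Proof. destruct k; simpl; lra. Qed.

Definition mi (r : nat) (t : R) : R := (1 - 2 * t) ^ r / sqrt (1 - t).
Definition Mr (r : nat) : R := RInt (mi r) 0 (1/2).
Definition bi (k : nat) (t : R) : R := t ^ k / sqrt (1 - t).
Definition pim (m : nat) (t : R) : R := t ^ m * sqrt (1 + t ^ 2).

Lemma calB_bi k : calB k = RInt (bi k) 0 (1/2).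
Proof. reflexivity. Qed.
Lemma varphi_pim m : varphi m = RInt (pim m) 0 1.
Proof. reflexivity. Qed.

Lemma cont_mi r z : z < 1 -> continuous (mi r) z.
Proof. intro Hz. apply (@ex_derive_continuous R_AbsRing R_NormedModule). unfold mi. auto_derive. assert (0 < sqrt (1 + - z)) by (apply sqrt_lt_R0; lra). repeat split; lra. Qed.
Lemma cont_bi k z : z < 1 -> continuous (bi k) z.
Proof. intro Hz. apply (@ex_derive_continuous R_AbsRing R_NormedModule). unfold bi. auto_derive. assert (0 < sqrt (1 + - z)) by (apply sqrt_lt_R0; lra). repeat split; lra. Qed.
Lemma cont_pim m z : continuous (pim m) z.
Proof. apply (@ex_derive_continuous R_AbsRing R_NormedModule). unfold pim. auto_derive. repeat split; nra. Qed.

Lemma exR_mi r : ex_RInt (mi r) 0 (1/2).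
Proof. apply (@ex_RInt_continuous R_CompleteNormedModule). intros z Hz. rewrite Rmin_left, Rmax_right in Hz by lra. apply cont_mi. lra. Qed.
Lemma exR_bi k : ex_RInt (bi k) 0 (1/2).
Proof. apply (@ex_RInt_continuous R_CompleteNormedModule). intros z Hz. rewrite Rmin_left, Rmax_right in Hz by lra. apply cont_bi. lra. Qed.
Lemma exR_pim m : ex_RInt (pim m) 0 1.
Proof. apply (@ex_RInt_continuous R_CompleteNormedModule). intros z Hz. apply cont_pim. Qed.

Lemma sqrt_half : sqrt (1/2) = sqrt 2 / 2.
Proof.
  assert (H : Rsqr (sqrt 2 / 2) = 1/2).
  { unfold Rsqr. replace (sqrt 2 / 2 * (sqrt 2 / 2)) with ((sqrt 2 * sqrt 2) / 4) by field.
    rewrite sqrt_sqrt by lra. field. }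
  rewrite <- H. apply sqrt_Rsqr. assert (0 < sqrt 2) by (apply sqrt_lt_R0; lra). lra.
Qed.

Lemma calB_0 : calB 0 = 2 - sqrt 2.
Proof.
  rewrite calB_bi. apply is_RInt_unique.
  replace (2 - sqrt 2) with ((fun t => -2 * sqrt (1 - t)) (1/2) - (fun t => -2 * sqrt (1 - t)) 0).
  2:{ simpl. replace (1 - 1/2) with (1/2) by field. rewrite sqrt_half.
      replace (1 - 0) with 1 by ring. rewrite sqrt_1. field. }
  apply (is_RInt_derive (fun t => -2 * sqrt (1 - t))).
  - intros t Ht. rewrite Rmin_left, Rmax_right in Ht by lra. unfold bi.
    auto_derive. lra. replace (1 + - t) with (1 - t) by ring.
    assert (0 < sqrt (1 - t)) by (apply sqrt_lt_R0; lra). simpl. field. lra.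
  - intros t Ht. rewrite Rmin_left, Rmax_right in Ht by lra. apply cont_bi. lra.
Qed.

Lemma M_0 : Mr 0 = 2 - sqrt 2.
Proof. rewrite <- calB_0. reflexivity. Qed.

Lemma is_RInt_lin (f g : R -> R) a b If Ig al be :
  is_RInt f a b If -> is_RInt g a b Ig ->
  is_RInt (fun t => al * f t + be * g t) a b (al * If + be * Ig).
Proof.
  intros Hf Hg.
  exact (is_RInt_plus _ _ _ _ _ _ (is_RInt_scal _ _ _ al _ Hf) (is_RInt_scal _ _ _ be _ Hg)).
Qed.

Lemma M_rec r : (INR r + 3/2) * Mr (S r) + (INR r + 1) * Mr r = 1.
Proof.
  set (f := fun t => (1 - 2 * t) ^ (S r) * sqrt (1 - t)).
  set (df := fun t => - (INR r + 1) * mi r t + - (INR r + 3/2) * mi (S r) t).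
  assert (H1 : is_RInt df 0 (1/2) (f (1/2) - f 0)).
  { apply (is_RInt_derive f df).
    - intros t Ht. rewrite Rmin_left, Rmax_right in Ht by lra. unfold f, df, mi.
      auto_derive. lra. rewrite INR_match.
      replace (1 + - t) with (1 - t) by ring. replace (1 + - (2 * t)) with (1 - 2 * t) by ring.
      assert (Hs : 0 < sqrt (1 - t)) by (apply sqrt_lt_R0; lra).
      assert (Hs2 : sqrt (1 - t) * sqrt (1 - t) = 1 - t) by (apply sqrt_sqrt; lra).
      set (s := sqrt (1 - t)) in *.
      replace (1 - 2 * t) with (2 * (s * s) - 1) by (rewrite Hs2; ring).
      simpl pow. field. lra.
    - intros t Ht. rewrite Rmin_left, Rmax_right in Ht by lra. unfold df.
      apply (continuous_plus (fun t => - (INR r + 1) * mi r t)).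
      apply (continuous_scal_r (- (INR r + 1)) (mi r)). apply cont_mi. lra.
      apply (continuous_scal_r _ (mi (S r))). apply cont_mi. lra. }
  assert (H2 : is_RInt df 0 (1/2) (- (INR r + 1) * Mr r + - (INR r + 3/2) * Mr (S r))).
  { apply is_RInt_lin; apply (@RInt_correct R_CompleteNormedModule); apply exR_mi. }
  assert (E : f (1/2) - f 0 = -1).
  { unfold f. simpl. replace (1 - 2 * (1/2)) with 0 by field. replace (1 - 2 * 0) with 1 by ring.
    replace (1 - 0) with 1 by ring. rewrite sqrt_1, pow1, !Rmult_0_l. lra. }
  rewrite E in H1.
  apply (@is_RInt_unique R_CompleteNormedModule) in H1. apply (@is_RInt_unique R_CompleteNormedModule) in H2. rewrite H1 in H2. lra.
Qed.

Lemma varphi_1 : varphi 1 = (2 * sqrt 2 - 1) / 3.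
Proof.
  rewrite varphi_pim. apply is_RInt_unique.
  set (g := fun t => (1 + t ^ 2) * sqrt (1 + t ^ 2) / 3).
  replace ((2 * sqrt 2 - 1) / 3) with (g 1 - g 0).
  2:{ unfold g. simpl. replace (1 + 1 * (1 * 1)) with 2 by ring. replace (1 + 0 * (0 * 1)) with 1 by ring.
      rewrite sqrt_1. field. }
  apply (is_RInt_derive g).
  - intros t Ht. unfold g, pim. auto_derive. nra.
    replace (1 + t * (t * 1)) with (1 + t ^ 2) by ring.
    assert (Hs : 0 < sqrt (1 + t ^ 2)) by (apply sqrt_lt_R0; nra).
    assert (Hs2 : sqrt (1 + t ^ 2) * sqrt (1 + t ^ 2) = 1 + t ^ 2) by (apply sqrt_sqrt; nra).
    set (s := sqrt (1 + t ^ 2)) in *. rewrite <- Hs2. simpl. field. lra.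
  - intros. apply cont_pim.
Qed.

Lemma varphi_rec r :
  (2 * INR r + 2) * varphi (2 * r + 1) + (2 * INR r + 5) * varphi (2 * S r + 1) = 2 * sqrt 2.
Proof.
  rewrite !varphi_pim.
  replace (2 * S r + 1)%nat with (S (S (S (2 * r)))) by lia.
  replace (2 * r + 1)%nat with (S (2 * r)) by lia.
  set (k := (2 * r)%nat).
  assert (Ek : INR k = 2 * INR r) by (unfold k; rewrite mult_INR; simpl; ring).
  rewrite <- Ek. clearbody k.
  set (g := fun t => t ^ (S (S k)) * (1 + t ^ 2) * sqrt (1 + t ^ 2)).
  set (df := fun t => (INR k + 2) * pim (S k) t + (INR k + 5) * pim (S (S (S k))) t).
  assert (H1 : is_RInt df 0 1 (g 1 - g 0)).
  { apply (is_RInt_derive g df).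
    - intros t Ht. unfold g, df, pim. auto_derive. nra. rewrite INR_match.
      replace (1 + t * (t * 1)) with (1 + t ^ 2) by ring.
      assert (Hs : 0 < sqrt (1 + t ^ 2)) by (apply sqrt_lt_R0; nra).
      assert (Hs2 : sqrt (1 + t ^ 2) * sqrt (1 + t ^ 2) = 1 + t ^ 2) by (apply sqrt_sqrt; nra).
      set (s := sqrt (1 + t ^ 2)) in *. replace (/ (2 * s)) with (s / (2 * (1 + t ^ 2))) by (rewrite <- Hs2; field; lra). simpl pow. field. nra.
    - intros t Ht. unfold df.
      apply (continuous_plus (fun t => (INR k + 2) * pim (S k) t)).
      apply (continuous_scal_r _ (pim (S k))). apply cont_pim.
      apply (continuous_scal_r _ (pim (S (S (S k))))). apply cont_pim. }
  assert (H2 : is_RInt df 0 1 ((INR k + 2) * RInt (pim (S k)) 0 1 + (INR k + 5) * RInt (pim (S (S (S k)))) 0 1)).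
  { apply is_RInt_lin; apply (@RInt_correct R_CompleteNormedModule); apply exR_pim. }
  assert (E : g 1 - g 0 = 2 * sqrt 2).
  { unfold g. rewrite pow1, (pow_i (S (S k))) by lia.
    replace (1 + 1 ^ 2) with 2 by ring. ring. }
  rewrite E in H1.
  apply (@is_RInt_unique R_CompleteNormedModule) in H1. apply (@is_RInt_unique R_CompleteNormedModule) in H2. rewrite H1 in H2.
  replace (INR k + 2) with (2 * INR r + 2) in H2 by lra.
  replace (INR k + 5) with (2 * INR r + 5) in H2 by lra. rewrite Ek. lra.
Qed.

Lemma RInt_sum (g : nat -> R -> R) a b n :
  (forall i, ex_RInt (g i) a b) ->
  ex_RInt (fun t => sum_f_R0 (fun i => g i t) n) a b /\
  RInt (fun t => sum_f_R0 (fun i => g i t) n) a b = sum_f_R0 (fun i => RInt (g i) a b) n.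
Proof.
  intro Hg. induction n as [|n [IH1 IH2]].
  - simpl. split. apply Hg. reflexivity.
  - simpl. split.
    + apply (@ex_RInt_plus R_CompleteNormedModule (fun t => sum_f_R0 (fun i => g i t) n) (g (S n))). exact IH1. apply Hg.
    + rewrite <- IH2.
      exact (@RInt_plus R_CompleteNormedModule (fun t => sum_f_R0 (fun i => g i t) n) (g (S n)) a b IH1 (Hg (S n))).
Qed.

Lemma mi_exp r t : mi r t = sum_f_R0 (fun i => (binomR r i * (-2) ^ i) * bi i t) r.
Proof.
  unfold mi, bi, binomR. replace (1 - 2 * t) with (-2 * t + 1) by ring.
  rewrite binomial. unfold Rdiv. rewrite Rmult_comm, scal_sum.
  apply sum_eq. intros i Hi. rewrite pow1, Rpow_mult_distr. ring.
Qed.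

Lemma M_exp r : Mr r = sum_f_R0 (fun k => binomR r k * (-2) ^ k * calB k) r.
Proof.
  unfold Mr.
  assert (Hg : forall i, ex_RInt (fun t => (binomR r i * (-2) ^ i) * bi i t) 0 (1/2)).
  { intro i. apply (@ex_RInt_scal R_CompleteNormedModule (bi i) 0 (1/2) (binomR r i * (-2) ^ i)). apply exR_bi. }
  rewrite (RInt_ext (mi r) (fun t => sum_f_R0 (fun i => (binomR r i * (-2) ^ i) * bi i t) r)).
  2:{ intros t _. apply mi_exp. }
  rewrite (proj2 (RInt_sum (fun i t => (binomR r i * (-2) ^ i) * bi i t) 0 (1/2) r Hg)).
  apply sum_eq. intros i Hi.
  assert (Hs := @RInt_scal R_CompleteNormedModule (bi i) 0 (1/2) (binomR r i * (-2) ^ i) (exR_bi i)).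
  change (RInt (fun t => binomR r i * (-2) ^ i * bi i t) 0 (1/2) = binomR r i * (-2) ^ i * RInt (bi i) 0 (1/2)) in Hs.
  rewrite Hs, calB_bi. reflexivity.
Qed.

Definition Kp (m : nat) : R :=
  sum_f_R0 (fun k => (-2) ^ k * binomR m k / (2 * INR k + 1) * calB k) m.

Lemma binom_rel m k : (k <= m)%nat ->
  binomR m k = (INR m + 1 - INR k) * binomR (S m) k / (INR m + 1).
Proof.
  intro Hk. unfold binomR, Binomial.C.
  replace (S m - k)%nat with (S (m - k)) by lia.
  rewrite !fact_simpl, !mult_INR, !S_INR, minus_INR by lia.
  assert (H1 := INR_fact_neq_0 m). assert (H2 := INR_fact_neq_0 k). assert (H3 := INR_fact_neq_0 (m - k)).
  assert (0 <= INR m) by apply pos_INR. assert (INR k <= INR m) by (apply le_INR; lia).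
  field. repeat split; lra.
Qed.

Lemma K_rec m : (2 * INR m + 3) * Kp (S m) = Mr (S m) + 2 * (INR m + 1) * Kp m.
Proof.
  rewrite M_exp. unfold Kp. cbn [sum_f_R0].
  rewrite Rmult_plus_distr_l.
  rewrite scal_sum, (scal_sum (fun k => (-2) ^ k * binomR m k / (2 * INR k + 1) * calB k)).
  assert (E : sum_f_R0 (fun i => (-2) ^ i * binomR (S m) i / (2 * INR i + 1) * calB i * (2 * INR m + 3)) m
    = sum_f_R0 (fun i => binomR (S m) i * (-2) ^ i * calB i) m
      + sum_f_R0 (fun i => (-2) ^ i * binomR m i / (2 * INR i + 1) * calB i * (2 * (INR m + 1))) m).
  { rewrite <- plus_sum. apply sum_eq. intros i Hi.
    rewrite (binom_rel m i Hi).
    assert (0 <= INR i) by apply pos_INR. assert (0 <= INR m) by apply pos_INR.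
    field. lra. }
  rewrite E. rewrite S_INR.
  assert (0 <= INR m) by apply pos_INR.
  field. lra.
Qed.

Lemma sqrt2_pos : 0 < sqrt 2.
Proof. apply sqrt_lt_R0. lra. Qed.
Lemma sqrt2_sq : sqrt 2 * sqrt 2 = 2.
Proof. apply sqrt_sqrt. lra. Qed.

Definition Zt (r : nat) : R := 4 ^ r * YS r / sqrt 2.
Definition Mt (r : nat) : R := (2 * INR r + 1) * Zt (S r) - 2 * INR r * Zt r.

Lemma Mt_0 : Mt 0 = 2 - sqrt 2.
Proof.
  unfold Mt, Zt. simpl INR. assert (H := YS_1). assert (P := sqrt2_pos). assert (Q := sqrt2_sq).
  replace ((2 * 0 + 1) * (4 ^ 1 * YS 1 / sqrt 2) - 2 * 0 * (4 ^ 0 * YS 0 / sqrt 2))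
    with ((4 * YS 1) / sqrt 2) by (simpl; field; lra).
  rewrite H. apply Rmult_eq_reg_r with (sqrt 2). 2: lra.
  unfold Rdiv. rewrite Rmult_assoc, Rinv_l by lra. nra.
Qed.

Lemma Mt_rec r : (INR r + 3/2) * Mt (S r) + (INR r + 1) * Mt r = 1.
Proof.
  assert (HY := YS_rec r). assert (P := sqrt2_pos).
  assert (P4 : 0 < 4 ^ r) by (apply pow_lt; lra).
  unfold Mt, Zt. rewrite !S_INR in *.
  replace ((INR r + 3 / 2) *
   ((2 * (INR r + 1) + 1) * (4 ^ S (S r) * YS (S (S r)) / sqrt 2) -
    2 * (INR r + 1) * (4 ^ S r * YS (S r) / sqrt 2)) +
   (INR r + 1) *
   ((2 * INR r + 1) * (4 ^ S r * YS (S r) / sqrt 2) - 2 * INR r * (4 ^ r * YS r / sqrt 2)))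
   with (2 * 4 ^ r / sqrt 2 * (4 * (2 * (INR r + 1) + 1) ^ 2 * YS (S (S r)) - 4 * (INR r + 1) * YS (S r) -
      (INR r + 1) * INR r * YS r)) by (simpl pow; field; lra).
  rewrite HY. simpl pow. field. lra.
Qed.

Lemma M_eq r : Mt r = Mr r.
Proof.
  induction r.
  - rewrite Mt_0, M_0. reflexivity.
  - assert (A := Mt_rec r). assert (B := M_rec r). assert (0 <= INR r) by apply pos_INR.
    apply Rmult_eq_reg_l with (INR r + 3/2). 2: lra.
    rewrite IHr in A. lra.
Qed.

Lemma Kp_0 : Kp 0 = calB 0.
Proof. unfold Kp, binomR, Binomial.C. simpl. field. Qed.

Lemma Z_eq m : Zt (S m) = Kp m.
Proof.
  induction m.
  - rewrite Kp_0, calB_0, <- Mt_0. unfold Mt. simpl INR. ring.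
  - assert (A := K_rec m). rewrite <- M_eq in A. unfold Mt in A. rewrite S_INR in A.
    rewrite IHm in A. assert (0 <= INR m) by apply pos_INR.
    apply Rmult_eq_reg_l with (2 * INR m + 3). 2: lra.
    lra.
Qed.

Lemma X_eq r : XS r = - varphi (2 * r + 1) / 4 ^ r.
Proof.
  induction r.
  - simpl (2 * 0 + 1)%nat. rewrite varphi_1. assert (H := XS_0). simpl pow. lra.
  - assert (A := XS_rec r). assert (B := varphi_rec r).
    assert (0 <= INR r) by apply pos_INR. assert (P4 : 0 < 4 ^ r) by (apply pow_lt; lra).
    rewrite S_INR in A. rewrite IHr in A.
    apply Rmult_eq_reg_l with (4 * (INR r + 1) + 6). 2: lra.
    replace ((4 * (INR r + 1) + 6) * XS (S r)) with (- (sqrt 2 / 4 ^ r) - (INR r + 1) * (- varphi (2 * r + 1) / 4 ^ r)) by lra.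
    replace (varphi (2 * S r + 1)) with ((2 * sqrt 2 - (2 * INR r + 2) * varphi (2 * r + 1)) / (2 * INR r + 5)).
    2:{ apply Rmult_eq_reg_l with (2 * INR r + 5). 2: lra. field_simplify. lra. lra. }
    simpl pow. field. lra.
Qed.

Lemma summand_xy r n : summand r n = (x r n + y r n) / 4.
Proof.
  unfold summand, x, y, h.
  replace (4 * n + 2 * r)%nat with (2 * (2 * n + r))%nat by lia.
  change (binomR (2 * n) n) with (cb n). change (binomR (2 * (2 * n + r)) (2 * n + r)) with (cb (2 * n + r)).
  assert (E := two_n_m1 n). assert (0 <= INR n) by apply pos_INR. assert (0 <= INR r) by apply pos_INR.
  assert (A := cb_pos n). assert (B := cb_pos (2 * n + r)).
  field. repeat split; try lra. intro C. apply E. nra.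
Qed.

Theorem theorem3p0p6 (r : nat) (hr : (1 <= r)%nat) :
  is_series (fun n : nat => summand r (S n))
    (/ sqrt 2 *
       sum_f_R0 (fun k : nat =>
         (-1) ^ k / ((2 * INR k + 1) * 2 ^ (2 * r - k + 1))
         * binomR (r - 1) k * calB k) (r - 1)
     - varphi (2 * r + 1) / 2 ^ (2 * r + 2)).
Proof.
  destruct r as [|m]. lia. clear hr.
  replace (S m - 1)%nat with m by lia.
  assert (HS : is_series (summand (S m)) ((XS (S m) + YS (S m)) / 4)).
  { assert (H := is_series_lin _ _ _ _ (1/4) (1/4) (Series_correct _ (ex_x (S m))) (Series_correct _ (ex_y (S m)))).
    replace ((XS (S m) + YS (S m)) / 4) with (1/4 * Series (x (S m)) + 1/4 * Series (y (S m))) by (unfold XS, YS; field).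
    apply (is_series_ext _ _ _ (fun n => eq_sym (eq_trans (summand_xy (S m) n) (ltac:(field) : (x (S m) n + y (S m) n) / 4 = 1/4 * x (S m) n + 1/4 * y (S m) n)))) in H.
    exact H. }
  assert (H0 : summand (S m) 0 = 0) by (unfold summand; simpl INR; unfold Rdiv; ring).
  apply is_series_incr_1. rewrite H0.
  replace (plus _ 0) with ((XS (S m) + YS (S m)) / 4).
  exact HS.
  change (plus ?a 0) with (a + 0). rewrite Rplus_0_r.
  rewrite X_eq.
  replace (YS (S m)) with (sqrt 2 * Zt (S m) / 4 ^ S m).
  2:{ unfold Zt. assert (P := sqrt2_pos). assert (0 < 4 ^ S m) by (apply pow_lt; lra). field. lra. }
  rewrite Z_eq.
  assert (ES : sum_f_R0 (fun k : nat => (-1) ^ k / ((2 * INR k + 1) * 2 ^ (2 * S m - k + 1)) * binomR m k * calB k) m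
     = Kp m / 2 ^ (2 * m + 3)).
  { unfold Kp, Rdiv at 2. rewrite Rmult_comm, scal_sum. apply sum_eq. intros k Hk.
    assert (E2 : 2 ^ (2 * S m - k + 1) = 2 ^ (2 * m + 3) / 2 ^ k).
    { assert (0 < 2 ^ k) by (apply pow_lt; lra).
      apply Rmult_eq_reg_r with (2 ^ k). 2: lra.
      rewrite <- pow_add. unfold Rdiv. rewrite Rmult_assoc, Rinv_l, Rmult_1_r by lra.
      f_equal. lia. }
    rewrite E2. replace (-2) with (-1 * 2) by ring. rewrite Rpow_mult_distr.
    assert (0 < 2 ^ k) by (apply pow_lt; lra). assert (0 < 2 ^ (2 * m + 3)) by (apply pow_lt; lra).
    assert (0 <= INR k) by apply pos_INR.
    field. lra. }
  rewrite ES.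
  assert (E5 : 2 ^ (2 * S m + 2) = 2 * 2 ^ (2 * m + 3)).
  { replace (2 * S m + 2)%nat with (S (2 * m + 3)) by lia. reflexivity. }
  assert (E4 : 4 ^ S m * 4 = 2 * 2 ^ (2 * m + 3)).
  { replace 4 with (2 ^ 2) by ring. rewrite <- pow_mult, <- pow_add. exact E5. }
  rewrite E5.
  assert (P := sqrt2_pos). assert (Q := sqrt2_sq). assert (0 < 2 ^ (2 * m + 3)) by (apply pow_lt; lra).
  replace (/ sqrt 2) with (sqrt 2 / 2) by (apply Rmult_eq_reg_l with (sqrt 2); [rewrite Rinv_r by lra; unfold Rdiv; rewrite <- Rmult_assoc, Q; field | lra]).
  replace ((- varphi (2 * S m + 1) / 4 ^ S m + sqrt 2 * Kp m / 4 ^ S m) / 4)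
    with ((- varphi (2 * S m + 1) + sqrt 2 * Kp m) / (4 ^ S m * 4)).
  2:{ assert (0 < 4 ^ S m) by (apply pow_lt; lra). field. lra. }
  rewrite E4. field. lra.
Qed.
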